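(* Let $G$ be a symmetrically factorizable Lie group with subgroups $G_\pm$ and conjugating element $\theta$. If $\theta^2$ admits a unique factorization $\theta^2=(\theta^2)_+(\theta^2)_-^{-1}$ with $(\theta^2)_\pm\in G_\pm$, then $\tilde\theta:=(\theta^2)_+^{-1}\theta$ is also a conjugating element and it is unipotent.
   Context: A Lie group $G$ with Lie algebra $\mathfrak g$ is symmetrically factorizable if $\mathfrak g=\mathfrak g_+\oplus\mathfrak g_-$ as a vector space, where $\mathfrak g_\pm$ are Lie subalgebras, and there is an element $\theta\in G$ (a conjugating element) with $\theta G_-=G_+\theta$, where $G_\pm$ are the Lie subgroups corresponding to $\mathfrak g_\pm$. For $g$ in an open dense neighbourhood of the identity one writes $g=g_+g_-^{-1}$ with $g_\pm\in G_\pm$. Here ``$\tilde\theta$ is unipotent'' is used in the sense $\tilde\theta^2=1$. *)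

(* Defs.v *)
(* abstract (possibly infinite) groups, no Lie structure. *)
Set Implicit Arguments.

Record Group := {
  carrier :> Type;
  gmul : carrier -> carrier -> carrier;
  gone : carrier;
  ginv : carrier -> carrier;
  gmulA : forall x y z, gmul x (gmul y z) = gmul (gmul x y) z;
  gmul1l : forall x, gmul gone x = x;
  gmul1r : forall x, gmul x gone = x;
  gmulVl : forall x, gmul (ginv x) x = gone;
  gmulVr : forall x, gmul x (ginv x) = gone
}.

Arguments gmul {g}.
Arguments gone {g}.
Arguments ginv {g}.

Definition is_subgroup (G : Group) (H : G -> Prop) : Prop :=
  H gone /\ (forall x y, H x -> H y -> H (gmul x y)) /\ (forall x, H x -> H (ginv x)).

Definition conjugating (G : Group) (Gp Gm : G -> Prop) (theta : G) : Prop :=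
  forall g : G, (exists h, Gm h /\ g = gmul theta h) <-> (exists k, Gp k /\ g = gmul k theta).

Definition unique_factorization (G : Group) (Gp Gm : G -> Prop) (g : G) : Prop :=
  exists p m, (Gp p /\ Gm m /\ g = gmul p (ginv m)) /\
    forall p' m', Gp p' -> Gm m' -> g = gmul p' (ginv m') -> p' = p /\ m' = m.

(* "unipotent" in the paper's sense: x^2 = 1. *)
Definition unipotent (G : Group) (x : G) : Prop := gmul x x = gone.

Arguments is_subgroup {G}.
Arguments conjugating {G}.
Arguments unique_factorization {G}.
Arguments unipotent {G}.

(* Main.v *)
Require Import Defs.

Section Aux.
Variable G : Group.
Lemma lcancel (a x y : G) : gmul a x = gmul a y -> x = y.
Proof.
  intro H. rewrite <- (gmul1l _ x), <- (gmul1l _ y), <- (gmulVl _ a), <- !gmulA, H. reflexivity.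
Qed.
Lemma rcancel (a x y : G) : gmul x a = gmul y a -> x = y.
Proof.
  intro H. rewrite <- (gmul1r _ x), <- (gmul1r _ y), <- (gmulVr _ a), !gmulA, H. reflexivity.
Qed.
Lemma ginv_mul (x y : G) : ginv (gmul x y) = gmul (ginv y) (ginv x).
Proof.
  apply (lcancel (gmul x y)). rewrite gmulVr, <- gmulA, (gmulA _ y), gmulVr, gmul1l, gmulVr.
  reflexivity.
Qed.
End Aux.

Theorem mainTheorem5 (G : Group) (Gp Gm : G -> Prop)
  (hGp : is_subgroup Gp) (hGm : is_subgroup Gm)
  (theta : G) (htheta : conjugating Gp Gm theta)
  (hfac : unique_factorization Gp Gm (gmul theta theta))
  (tp tm : G) (htp : Gp tp) (htm : Gm tm)
  (hdec : gmul theta theta = gmul tp (ginv tm)) :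
  conjugating Gp Gm (gmul (ginv tp) theta) /\ unipotent (gmul (ginv tp) theta).
Proof.
  destruct hGp as [p1 [pM pV]]. destruct hGm as [m1 [mM mV]].
  set (t := gmul (ginv tp) theta).
  assert (hconj : conjugating Gp Gm t).
  { intro g. split.
    - intros [h [hh ->]].
      destruct (proj1 (htheta (gmul theta h)) (ex_intro _ h (conj hh eq_refl))) as [k [hk hk']].
      exists (gmul (gmul (ginv tp) k) tp). split.
      + apply pM; [apply pM|]; auto.
      + unfold t. rewrite <- gmulA, hk'. rewrite <- !gmulA. rewrite (gmulA _ tp), gmulVr, gmul1l.
        reflexivity.
    - intros [k [hk ->]].
      destruct (proj2 (htheta (gmul (gmul (gmul tp k) (ginv tp)) theta)))
        as [h [hh hh']].
      { exists (gmul (gmul tp k) (ginv tp)). split; [apply pM; [apply pM|]; auto | reflexivity]. }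
      exists h. split; auto. unfold t. rewrite <- gmulA, <- hh'.
      rewrite !gmulA, gmulVl, gmul1l. reflexivity. }
  split; [exact hconj|].
  destruct (proj2 (htheta t) (ex_intro _ (ginv tp) (conj (pV _ htp) eq_refl))) as [c [hc ht]].
  set (u := gmul t t).
  assert (hu1 : u = gmul (ginv tm) c).
  { unfold u. transitivity (gmul t (gmul theta c)); [rewrite <- ht; reflexivity|]. rewrite gmulA. unfold t. rewrite <- (gmulA _ (ginv tp)), hdec.
    rewrite gmulA, gmulVl, gmul1l. reflexivity. }
  assert (hum : Gm u) by (rewrite hu1; apply mM; auto).
  destruct (proj1 (hconj (gmul t u)) (ex_intro _ u (conj hum eq_refl))) as [k [hk hk']].
  assert (hku : k = u).
  { apply (rcancel _ t). rewrite <- hk'. unfold u. apply gmulA. }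
  assert (hup : Gp u) by (rewrite <- hku; exact hk).
  destruct hfac as [p [m [[hp [hm heq]] huniq]]].
  destruct (huniq tp tm htp htm hdec) as [e1 _].
  destruct (huniq (gmul tp u) (gmul tm u) (pM _ _ htp hup) (mM _ _ htm hum)) as [e2 _].
  { rewrite hdec, ginv_mul, gmulA, <- (gmulA _ tp), gmulVr, gmul1r. reflexivity. }
  unfold unipotent. fold t. fold u.
  apply (lcancel _ tp). rewrite gmul1r, e2. symmetry. exact e1.
Qed.
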